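(* Consider a multi-sender single-uniprior index-coding instance with binary messages, information-flow graph $\mathcal{G}$ and message graph $\mathcal{U}$. Let $\mathcal{T}_1,\dots,\mathcal{T}_k$ be pairwise vertex-disjoint connecting trees. Then \[ \tilde{\ell}^*(\mathcal{G},\mathcal{U}) \leq V_{\mathrm{out}}(\mathcal{G}) - \big(N_{\mathrm{conn}}(\mathcal{G},\mathcal{U}) + k\big), \] where $N_{\mathrm{conn}}(\mathcal{G},\mathcal{U})$ is the number of message-connected leaf SCCs of $\mathcal{G}$. In particular the bound holds with $k$ replaced by the maximum number of pairwise vertex-disjoint connecting trees.
   Context: Multi-sender single-uniprior index coding with binary messages: there are $n$ receivers and $n$ independent messages $x_1,\dots,x_n$, each a single bit uniformly distributed on $\{0,1\}$. Receiver $i$ knows $x_i$ a priori and requests a set of messages not containing $x_i$. The information-flow graph is the directed graph $\mathcal{G}=(\mathcal{V},\mathcal{A})$, $\mathcal{V}=\{1,\dots,n\}$, with an arc $(j\to i)$ iff receiver $i$ requests $x_j$. There are $S$ senders; sender $s$ knows a subset $\mathcal{M}_s$ of the messages, and every message is known to some sender. An index code consists of, for each sender $s$, an encoding function mapping the messages in $\mathcal{M}_s$ to $\ell_s$ bits, and for each receiver $i$ a decoding function that, from all senders' outputs together with $x_i$, returns every message requested by $i$, for all message values; its length is $\sum_s \ell_s$. $\tilde{\ell}^*(\mathcal{G},\mathcal{U})$ is the minimum length of an index code for the instance. The message graph $\mathcal{U}$ is the undirected graph on $\mathcal{V}$ with an edge $\{i,j\}$ iff some sender knows both $x_i$ and $x_j$.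 A leaf vertex of $\mathcal{G}$ has no outgoing arcs; $V_{\mathrm{out}}(\mathcal{G})$ is the number of non-leaf vertices. A leaf SCC of $\mathcal{G}$ is a strongly connected component with at least two vertices and no arc from it to a vertex outside it. A leaf SCC with vertex set $\mathcal{V}_S$ is message-connected iff the subgraph of $\mathcal{U}$ induced by $\mathcal{V}_S$ is connected. A connecting tree is a subgraph $\mathcal{T}=(\mathcal{V}^{\mathrm T},\mathcal{E}^{\mathrm T})$ of $\mathcal{U}$ that is a tree (connected, acyclic), such that every vertex of $\mathcal{V}^{\mathrm T}$ has at least one outgoing arc in $\mathcal{G}$ and all its outgoing arcs go to vertices in $\mathcal{V}^{\mathrm T}$, and no vertex of $\mathcal{V}^{\mathrm T}$ belongs to a message-connected leaf SCC of $\mathcal{G}$. *)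

(* Defs.v *)
From mathcomp Require Import all_boot.
From mathcomp Require Import boolp.
Set Implicit Arguments. Unset Strict Implicit. Unset Printing Implicit Defensive.

(* Vertices / receivers / messages are 'I_n.
   arc : rel 'I_n is the information-flow graph: arc j i  <=>  receiver i requests x_j.
   M : 'I_S -> {set 'I_n} gives the messages known to each sender. *)

Section IndexCoding.
Variables (n S : nat) (arc : rel 'I_n) (M : 'I_S -> {set 'I_n}).

Definition is_index_code (ell : 'I_S -> nat) : Prop :=
  exists E : forall s : 'I_S, {ffun 'I_n -> bool} -> (ell s).-tuple bool,
    (forall s (x y : {ffun 'I_n -> bool}),
        (forall j, j \in M s -> x j = y j) -> E s x = E s y) /\
    exists D : forall i : 'I_n, (forall s : 'I_S, (ell s).-tuple bool) -> bool -> 'I_n -> bool,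
      forall (x : {ffun 'I_n -> bool}) (i j : 'I_n),
        arc j i -> D i (fun s => E s x) (x i) j = x j.

Definition achievable_length (L : nat) : Prop :=
  exists ell : 'I_S -> nat, is_index_code ell /\ \sum_(s < S) ell s = L.

(* minimum length of an index code (0 if no code exists, which cannot happen
   when every message is known to some sender) *)
Definition ell_star : nat :=
  match pselect (exists L, `[< achievable_length L >]) with
  | left h => ex_minn h
  | right _ => 0
  end.

Definition V_out : nat := #|[set i : 'I_n | [exists j, arc i j]]|.

Definition U_edge (i j : 'I_n) : bool :=
  (i != j) && [exists s, (i \in M s) && (j \in M s)].

Definition scc (i : 'I_n) : {set 'I_n} := [set j | connect arc i j && connect arc j i].

Definition leaf_scc (C : {set 'I_n}) : Prop :=
  (exists i, C = scc i) /\ 2 <= #|C| /\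
  (forall a b, a \in C -> arc a b -> b \in C).

Definition induced_U_connected (C : {set 'I_n}) : Prop :=
  forall a b, a \in C -> b \in C ->
    connect [rel u v | U_edge u v && (u \in C) && (v \in C)] a b.

Definition msg_conn_leaf_scc (C : {set 'I_n}) : Prop :=
  leaf_scc C /\ induced_U_connected C.

Definition N_conn : nat := #|[set C : {set 'I_n} | `[< msg_conn_leaf_scc C >]]|.

(* A subgraph (VT, ET) of U; edges are 2-element vertex sets. *)
Definition tree_edge_rel (ET : {set {set 'I_n}}) : rel 'I_n :=
  fun a b => [set a; b] \in ET.

Definition is_subgraph_of_U (VT : {set 'I_n}) (ET : {set {set 'I_n}}) : Prop :=
  forall e, e \in ET -> exists a b, [/\ e = [set a; b], a \in VT, b \in VT & U_edge a b].

Definition is_tree (VT : {set 'I_n}) (ET : {set {set 'I_n}}) : Prop :=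
  [/\ is_subgraph_of_U VT ET,
      VT != set0,
      (forall a b, a \in VT -> b \in VT -> connect (tree_edge_rel ET) a b) &
      (forall c : seq 'I_n, 2 < size c -> ~ ucycle (tree_edge_rel ET) c)].

Definition connecting_tree (VT : {set 'I_n}) (ET : {set {set 'I_n}}) : Prop :=
  [/\ is_tree VT ET,
      (forall v, v \in VT -> exists w, arc v w),
      (forall v w, v \in VT -> arc v w -> w \in VT) &
      (forall v C, v \in VT -> msg_conn_leaf_scc C -> v \notin C)].

End IndexCoding.

(* Main.v *)
Require Import Defs.
From mathcomp Require Import all_boot all_algebra.
From mathcomp Require Import boolp zify.
Import GRing.Theory Num.Theory.
Set Implicit Arguments. Unset Strict Implicit. Unset Printing Implicit Defensive.

Lemma code_gen n S (arc : rel 'I_n) (M : 'I_S -> {set 'I_n}) (X : finType)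
  (P : {set X}) (f : X -> 'I_S) (g : X -> {ffun 'I_n -> bool} -> bool)
  (gloc : forall l (x y : {ffun 'I_n -> bool}), (forall j, j \in M (f l) -> x j = y j) -> g l x = g l y)
  (gdec : forall i j, arc j i -> forall x y : {ffun 'I_n -> bool}, x i = y i ->
          (forall l, l \in P -> g l x = g l y) -> x j = y j) :
  achievable_length arc M #|P|.
Proof.
pose A s := [set l in P | f l == s].
exists (fun s => #|A s|); split; last first.
  rewrite -sum1_card (partition_big f xpredT) //.
  by apply: eq_bigr => s _; rewrite -sum1_card; apply: eq_bigl => l; rewrite inE.
pose E s x : #|A s|.-tuple bool := map_tuple (g^~ x) (enum_tuple (A s)).
exists E; split.
  move=> s x y Hxy; apply: val_inj => /=; apply/eq_in_map => l.
  rewrite mem_enum inE => /andP[_ /eqP fl]; apply: gloc => j jM; apply: Hxy; by rewrite -fl.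
pose D i (w : forall s : 'I_S, (#|A s|).-tuple bool) (b : bool) (j : 'I_n) :=
  if [pick y : {ffun 'I_n -> bool} | (y i == b) && [forall s, E s y == w s]] is Some y then y j else false.
exists D => x i j aji; rewrite /D; case: pickP => [y /andP[/eqP yi /forallP Ey] | H].
  apply/esym/(gdec i j aji) => // l lP.
  have := Ey (f l); move/eqP/(congr1 val) => /= /eq_in_map H; apply/esym/H.
  by rewrite mem_enum inE lP eqxx.
by have := H x; rewrite eqxx /=; move/negbT/forallPn => [s]; rewrite eqxx.
Qed.

Definition distP n (e : rel 'I_n) (r v : 'I_n) : pred nat :=
  fun m => [exists p : m.-tuple 'I_n, path e r p && (last r p == v)].

Definition dist n (e : rel 'I_n) (r v : 'I_n) : nat :=
  match pselect (exists m, distP e r v m) with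
  | left H => ex_minn H
  | right _ => 0
  end.

Lemma distP_of n (e : rel 'I_n) r v (p : seq 'I_n) :
  path e r p -> last r p = v -> distP e r v (size p).
Proof.
move=> pp lp; apply/existsP; exists (in_tuple p) => /=; by rewrite pp lp eqxx.
Qed.

Lemma dist_le n (e : rel 'I_n) r v (p : seq 'I_n) :
  path e r p -> last r p = v -> dist e r v <= size p.
Proof.
move=> pp lp; rewrite /dist; case: pselect => [H|H]; last first.
  by exfalso; apply: H; exists (size p); exact: distP_of.
by case: ex_minnP => m _ Hm; apply: Hm; exact: distP_of.
Qed.

Lemma dist_step n (e : rel 'I_n) r v :
  connect e r v -> v != r -> exists w, e w v && (dist e r w < dist e r v).
Proof.
move=> /connectP[p0 pp0 lp0] vr.
rewrite /dist; case: pselect => [H|H]; last first.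
  by exfalso; apply: H; exists (size p0); exact: distP_of.
case: ex_minnP => m /existsP[p /andP[pp /eqP lp]] Hm.
have sp : size p = m by rewrite size_tuple.
move: pp lp sp; case/lastP: (tval p) => [|q u].
  by move=> _ /= lr; rewrite lr eqxx in vr.
rewrite rcons_path last_rcons size_rcons => /andP[pq eu] uv sq.
exists (last r q); rewrite -uv eu /=.
apply: (@leq_ltn_trans (size q)); last by rewrite sq.
case: pselect => [H'|H']; last first.
  by exfalso; apply: H'; exists (size q); exact: distP_of.
by case: ex_minnP => m' _ Hm'; apply: Hm'; exact: distP_of.
Qed.

Definition eB n S (M : 'I_S -> {set 'I_n}) (B : {set 'I_n}) : rel 'I_n :=
  [rel u v | U_edge M u v && (u \in B) && (v \in B)].

Lemma blocks_code n S (arc : rel 'I_n) (M : 'I_S -> {set 'I_n}) (s0 : 'I_n -> 'I_S)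
  (M_cover : forall j, exists s, j \in M s)
  (Bl : {set {set 'I_n}})
  (Bne : forall B, B \in Bl -> B != set0)
  (Bdisj : forall B1 B2, B1 \in Bl -> B2 \in Bl -> B1 != B2 -> [disjoint B1 & B2])
  (Bcl : forall B j i, B \in Bl -> j \in B -> arc j i -> i \in B)
  (Bnl : forall B v, B \in Bl -> v \in B -> exists w, arc v w)
  (Bconn : forall B a b, B \in Bl -> a \in B -> b \in B -> connect (eB M B) a b) :
  achievable_length arc M (V_out arc - #|Bl|) /\ #|Bl| <= V_out arc.
Proof.
pose blk v := [pick B in Bl | v \in B].
pose rt (B : {set 'I_n}) := [pick u in B].
pose par v := if blk v is Some B then
   (if rt B is Some r then
     (if [pick w | eB M B w v && (dist (eB M B) r w < dist (eB M B) r v)] is Some w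
      then w else v) else v) else v.
pose R := [set v | [exists B in Bl, rt B == Some v]].
pose NL := [set v | [exists w, arc v w]].
pose A := NL :\: R.
pose f v := odflt (s0 v) [pick s | (v \in M s) && (par v \in M s)].
pose g v (x : {ffun 'I_n -> bool}) := if par v == v then x v else x v (+) x (par v).
have blkP v B : blk v = Some B -> B \in Bl /\ v \in B.
  rewrite /blk; case: pickP => [B' /andP[? ?] [<-] | //]; by [].
have blkE v B : B \in Bl -> v \in B -> blk v = Some B.
  move=> BB vB; rewrite /blk; case: pickP => [B' /andP[B'l vB'] | H].
    case: (eqVneq B' B) => [->//|ne].
    by have := disjointFr (Bdisj _ _ B'l BB ne) vB'; rewrite vB.
  by have := H B; rewrite BB vB.
have rtP B : B \in Bl -> exists2 r, rt B = Some r & r \in B.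
  move=> BB; rewrite /rt; case: pickP => [r rB|H]; first by exists r.
  by exfalso; move/negP: (Bne B BB); apply; apply/eqP/setP => u; rewrite inE H.
have rtin B r : rt B = Some r -> r \in B.
  by rewrite /rt; case: pickP => [u uB [<-] | ].
have parE v : par v = v \/ U_edge M (par v) v.
  rewrite /par; case: (blk v) => [B|]; last by left.
  case: (rt B) => [r|]; last by left.
  case: pickP => [w /andP[/andP[/andP[? _] _] _]|]; by [right | left].
have parB B r v : B \in Bl -> rt B = Some r -> v \in B -> v != r ->
    eB M B (par v) v && (dist (eB M B) r (par v) < dist (eB M B) r v).
  move=> BB rtB vB vr; rewrite /par (blkE v B BB vB) rtB.
  case: pickP => [w -> //|H].
  have [w Hw] := dist_step (Bconn _ _ _ BB (rtin _ _ rtB) vB) vr.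
  by rewrite H in Hw.
have fP v : (v \in M (f v)) && (par v \in M (f v)).
  rewrite /f; case: pickP => [s -> //|H]; exfalso.
  case: (parE v) => [pv|/andP[_ /existsP[s /andP[ps vs]]]].
    by have [s vs] := M_cover v; have := H s; rewrite pv vs.
  by have := H s; rewrite ps vs.
have RB v : v \in R -> exists2 B, B \in Bl & rt B = Some v.
  by rewrite inE => /existsP[B /andP[BB /eqP rB]]; exists B.
have RNL : R \subset NL.
  apply/subsetP => v /RB[B BB /rtin vB]; have [w avw] := Bnl _ _ BB vB.
  by rewrite inE; apply/existsP; exists w.
have cardR : #|R| = #|Bl|.
  pose bl v := odflt set0 (blk v).
  have -> : Bl = bl @: R.
    apply/setP => B; apply/idP/imsetP.
      move=> BB; have [r rtB rB] := rtP B BB; exists r.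
        by rewrite inE; apply/existsP; exists B; rewrite BB rtB eqxx.
      by rewrite /bl (blkE r B BB rB).
    by move=> [v /RB[B1 BB rtB] ->]; rewrite /bl (blkE v B1 BB (rtin _ _ rtB)).
  apply/esym/card_in_imset => v1 v2 /RB[B1 B1l rt1] /RB[B2 B2l rt2].
  rewrite /bl (blkE v1 B1 B1l (rtin _ _ rt1)) (blkE v2 B2 B2l (rtin _ _ rt2)) /=.
  by move=> E; move: rt1; rewrite E rt2 => -[].
have cardA : #|A| = V_out arc - #|Bl| by rewrite cardsDS // cardR.
split; last by rewrite -cardR; exact: subset_leq_card.
rewrite -cardA; apply: (code_gen (f := f) (g := g)).
  move=> l x y Hxy; rewrite /g; have /andP[l1 l2] := fP l.
  by rewrite (Hxy _ l1) (Hxy _ l2).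
move=> i j aji x y xyi Hg.
case Ej: (blk j) => [B|].
  have [BB jB] := blkP _ _ Ej.
  have iB := Bcl _ _ _ BB jB aji.
  have [r rtB rB] := rtP B BB.
  have claim : forall m v, dist (eB M B) r v < m -> v \in B ->
      x v (+) x r = y v (+) y r.
    elim=> [//|m IH] v dv vB.
    case: (eqVneq v r) => [->|vr]; first by rewrite !addbb.
    have /andP[eBp dp] := parB _ _ _ BB rtB vB vr.
    move: eBp; rewrite /eB /= /U_edge => /andP[/andP[/andP[pne _] pB] _].
    have vA : v \in A.
      rewrite !inE; apply/andP; split.
        apply/negP => /existsP[B' /andP[B'l /eqP rt']].
        have := blkE v B' B'l (rtin _ _ rt'); rewrite (blkE v B BB vB) => -[E].
        by move: rt'; rewrite -E rtB => -[E']; rewrite E' eqxx in vr.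
      by have [w avw] := Bnl _ _ BB vB; apply/existsP; exists w.
    have := Hg v vA; rewrite /g (negbTE pne).
    have := IH (par v) (leq_trans dp dv) pB.
    by case: (x v); case: (x (par v)); case: (x r); case: (y v); case: (y (par v)); case: (y r).
  have ci := claim _ i (ltnSn _) iB; have cj := claim _ j (ltnSn _) jB.
  move: ci cj; rewrite xyi.
  by case: (x j); case: (x r); case: (y j); case: (y r); case: (y i).
have pj : par j = j by rewrite /par Ej.
have jA : j \in A.
  rewrite !inE; apply/andP; split; last by apply/existsP; exists i.
  apply/negP => /existsP[B /andP[BB /eqP rt']].
  by rewrite (blkE j B BB (rtin _ _ rt')) in Ej.
by have := Hg j jA; rewrite /g pj eqxx.
Qed.
Local Open Scope ring_scope.

Lemma disjP (T0 : finType) (A B : {set T0}) :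
  (forall x, x \in A -> x \in B -> False) -> [disjoint A & B].
Proof.
move=> H; rewrite disjoint_subset; apply/subsetP => x xA.
by rewrite inE; apply/negP; exact: H x xA.
Qed.

Theorem theorem6 (n S : nat) (arc : rel 'I_n) (M : 'I_S -> {set 'I_n})
  (arc_irr : forall i : 'I_n, ~~ arc i i)
  (M_cover : forall j : 'I_n, exists s : 'I_S, j \in M s)
  (k : nat) (T : 'I_k -> {set 'I_n} * {set {set 'I_n}})
  (T_conn : forall a : 'I_k, connecting_tree arc M (T a).1 (T a).2)
  (T_disj : forall a b : 'I_k, a != b -> [disjoint (T a).1 & (T b).1]) :
  ((ell_star arc M)%:Z <= (V_out arc)%:Z - ((N_conn arc M)%:Z + k%:Z))%R.
Proof.
have Spos : forall v : 'I_n, (0 < S)%N.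
  by move=> v; have [s _] := M_cover v; apply: leq_ltn_trans (ltn_ord s).
pose s0 (v : 'I_n) : 'I_S := Ordinal (Spos v).
pose T1 := (fun a => (T a).1) @: [set: 'I_k].
pose Cs := [set C : {set 'I_n} | `[< msg_conn_leaf_scc arc M C >]].
pose Bl := T1 :|: Cs.
have sccE i v : v \in scc arc i -> scc arc v = scc arc i.
  rewrite inE => /andP[iv vi]; apply/setP => u; rewrite !inE.
  apply/andP/andP => [[vu uv]|[iu ui]]; split.
  - exact: connect_trans iv vu.
  - exact: connect_trans uv vi.
  - exact: connect_trans vi iu.
  - exact: connect_trans ui iv.
have CsP C : C \in Cs -> msg_conn_leaf_scc arc M C.
  by rewrite inE => /asboolP.
have T1P B : B \in T1 -> exists a, B = (T a).1.
  by move/imsetP => [a _ ->]; exists a.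
have Tne a : (T a).1 != set0 by have [[_ ? _ _] _ _ _] := T_conn a.
have Cne C : msg_conn_leaf_scc arc M C -> C != set0.
  move=> [[_ [c2 _]] _]; apply/negP => /eqP C0; by rewrite C0 cards0 in c2.
have TC a C v : msg_conn_leaf_scc arc M C -> v \in (T a).1 -> v \in C -> False.
  move=> HC vT vC; have [_ _ _ H4] := T_conn a; by move: (H4 v C vT HC); rewrite vC.
have TCdisj : T1 :&: Cs = set0.
  apply/setP => B; rewrite in_setI in_set0; apply/negP => /andP[/T1P[a ->] /CsP HC].
  have /set0Pn[v vT] := Tne a; apply: (TC a _ v HC vT vT).
have Tinj : injective (fun a => (T a).1).
  move=> a b /= E; apply/eqP; apply: contraT => ne.
  have /set0Pn[v va] := Tne a.
  by have := disjointFr (T_disj a b ne) va; rewrite -E va.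
have cardBl : #|Bl| = (k + N_conn arc M)%N.
  by rewrite cardsU TCdisj cards0 subn0 card_imset // cardsT card_ord.
have [Hach Hle] : achievable_length arc M (V_out arc - #|Bl|)%N /\ (#|Bl| <= V_out arc)%N.
  apply: (blocks_code s0 M_cover).
  - by move=> B; rewrite in_setU => /orP[/T1P[a ->]|/CsP/Cne //]; exact: Tne.
  - move=> B1 B2; rewrite !in_setU => /orP[/T1P[a ->]|/CsP H1] /orP[/T1P[b ->]|/CsP H2] ne.
    + by apply: T_disj; apply: contraNneq ne => ->.
    + by apply: disjP => v v1 v2; apply: (TC a _ v H2 v1 v2).
    + by apply: disjP => v v1 v2; apply: (TC b _ v H1 v2 v1).
    + apply: disjP => v v1 v2; move/negP: ne; apply.
      move: H1 H2 => [[[i1 E1] _] _] [[[i2 E2] _] _].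
      rewrite E1 in v1; rewrite E2 in v2.
      by rewrite E1 E2 -(sccE _ _ v1) -(sccE _ _ v2).
  - move=> B j i; rewrite in_setU => /orP[/T1P[a ->]|/CsP [[_ [_ H]] _]].
      by have [_ _ H3 _] := T_conn a; move=> jB aji; apply: H3 jB aji.
    by move=> jB aji; apply: H jB aji.
  - move=> B v; rewrite in_setU => /orP[/T1P[a ->]|/CsP [[[i E] [c2 _]] _]].
      by have [_ H2 _ _] := T_conn a; apply: H2.
    move=> vB.
    have : (0 < #|B :\ v|)%N by move: c2; rewrite (cardsD1 v B) vB.
    case/card_gt0P => u; rewrite !inE => /andP[uv uB].
    have : connect arc v u.
      move: vB uB; rewrite E !inE => /andP[_ vi] /andP[iu _].
      exact: connect_trans vi iu.
    case/connectP => [[|w p] /=]; first by move=> _ E'; rewrite E' eqxx in uv.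
    by case/andP => avw _ _; exists w.
  - move=> B a b; rewrite in_setU => /orP[/T1P[c ->]|/CsP [_ H]]; last first.
      by move=> aB bB; apply: H.
    have [[H1 _ H3 _] _ _ _] := T_conn c.
    move=> aB bB; apply: connect_sub (H3 a b aB bB) => u w Huw.
    apply: connect1; have [a' [b' [E a'T b'T /andP[ne /existsP[s /andP[sa sb]]]]]] := H1 _ Huw.
    have uin : u \in [set a'; b'] by rewrite -E !inE eqxx.
    have win : w \in [set a'; b'] by rewrite -E !inE eqxx orbT.
    move: uin win; rewrite !inE => uin win.
    rewrite /eB /= /U_edge; apply/andP; split; [apply/andP; split|].
    + apply/andP; split.
        apply/negP => /eqP uw; subst w.
        have : a' \in [set u; u] by rewrite E !inE eqxx.
        have : b' \in [set u; u] by rewrite E !inE eqxx orbT.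
        rewrite !inE !orbb => /eqP bu /eqP au; by rewrite au bu eqxx in ne.
      apply/existsP; exists s.
      by case/orP: uin => /eqP ->; case/orP: win => /eqP ->; rewrite ?sa ?sb.
    + by case/orP: uin => /eqP ->.
    + by case/orP: win => /eqP ->.
have Hell : (ell_star arc M <= V_out arc - #|Bl|)%N.
  rewrite /ell_star; case: pselect => [H|H]; last first.
    by exfalso; apply: H; exists (V_out arc - #|Bl|)%N; apply/asboolP.
  by case: ex_minnP => m _ Hm; apply: Hm; apply/asboolP.
rewrite cardBl in Hell Hle; lia.
Qed.
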